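(* The zero-error capacity of a finite-state erasure channel with topological entropy $h_{ch}$ and maximal ratio $\tau$ satisfies $1-\tau-h_{ch}\le C_0\le 1-\tau$.
   Context: Logarithms are to base $q=|\mathcal{X}|\ge2$, $\mathcal{X}$ the finite input alphabet. Finite-state erasure channel: a strongly connected directed graph $\mathscr{G}=(\mathcal{S},\mathcal{E})$ with finite vertex set $\mathcal{S}$ and $\mathcal{E}\subseteq\mathcal{S}\times\mathcal{S}$, each edge labelled $\ell(e)\in\{0,1\}$, distinct edges leaving the same state having distinct labels. A noise word $v(0:n-1)$ is admissible from initial state $s_0$ if it is the label sequence of a walk of length $n$ starting at $s_0$; output $y(t)=x(t)$ if $v(t)=0$ and $y(t)=*$ (a symbol not in $\mathcal{X}$) if $v(t)=1$. The initial state is arbitrary and unknown. A zero-error code of length $n$ is a set $\mathcal{F}\subseteq\mathcal{X}^n$ such that no output word can be produced (for any initial states and admissible noise) by two distinct codewords; $C_0=\sup_n\sup_{\mathcal{F}}\log|\mathcal{F}|/n$. The adjacency matrix $\mathcal{A}$ has $\mathcal{A}_{s,s'}=1$ iff $(s,s')\in\mathcal{E}$, $\lambda$ is its Perron eigenvalue, $h_{ch}=\log\lambda$. The maximal ratio is $\tau=\max_i e_i/l_i$ over directed simple cycles ($e_i$ = number of edges labelled 1, $l_i$ = length). *)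

(* Defs.v *)
From Stdlib Require Import Reals.
From mathcomp Require Import all_boot.
Set Implicit Arguments. Unset Strict Implicit. Unset Printing Implicit Defensive.

Definition logb (q : nat) (x : R) : R := Rdiv (ln x) (ln (INR q)).

Section FSEC.
Variables (X S : finType) (E : rel S) (lab : S -> S -> bool).

Definition strongly_connected : Prop :=
  forall s s' : S, exists p : seq S, p <> [::] /\ path E s p /\ last s p = s'.

Definition distinct_labels : Prop :=
  forall s s1 s2 : S, E s s1 -> E s s2 -> lab s s1 = lab s s2 -> s1 = s2.

Definition adj (s s' : S) : R := if E s s' then R1 else R0.

(* lam is the Perron eigenvalue of the adjacency matrix: the (positive) eigenvalue
   admitting an entrywise positive eigenvector (unique by Perron--Frobenius). *)
Definition perron_eigenvalue (lam : R) : Prop :=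
  Rlt 0 lam /\
  exists v : S -> R, (forall s, Rlt 0 (v s)) /\
    forall s, \big[Rplus/R0]_(s' : S) Rmult (adj s s') (v s') = Rmult lam (v s).

Definition simple_cycle (c : seq S) : bool := [&& c != [::], cycle E c & uniq c].

Definition cycle_edges (c : seq S) : seq (S * S) := zip c (rot 1 c).

Definition cycle_ones (c : seq S) : nat := count (fun e => lab e.1 e.2) (cycle_edges c).
Definition cycle_ratio (c : seq S) : R := Rdiv (INR (cycle_ones c)) (INR (size c)).

Definition maximal_ratio (tau : R) : Prop :=
  (exists c, simple_cycle c /\ cycle_ratio c = tau) /\
  (forall c, simple_cycle c -> Rle (cycle_ratio c) tau).

Definition walk_labels (s0 : S) (p : seq S) : seq bool :=
  map (fun e => lab e.1 e.2) (zip (s0 :: p) p).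

Definition admissible (s0 : S) (v : seq bool) : Prop :=
  exists p : seq S, size p = size v /\ path E s0 p /\ walk_labels s0 p = v.

(* Channel output: None stands for the erasure symbol *. *)
Definition output (x : seq X) (v : seq bool) : seq (option X) :=
  map (fun xv => if xv.2 then None else Some xv.1) (zip x v).

Definition zero_error_code (n : nat) (F : {set n.-tuple X}) : Prop :=
  forall x1 x2 : n.-tuple X, x1 \in F -> x2 \in F -> x1 <> x2 ->
  forall (s1 s2 : S) (v1 v2 : n.-tuple bool),
    admissible s1 v1 -> admissible s2 v2 -> output x1 v1 <> output x2 v2.

Definition code_rates (r : R) : Prop :=
  exists (n : nat) (F : {set n.-tuple X}),
    (0 < n)%N /\ zero_error_code F /\ r = Rdiv (logb #|X| (INR #|F|)) (INR n).

Definition zero_error_capacity (C0 : R) : Prop := is_lub code_rates C0.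

End FSEC.

(* Main.v *)
From HB Require Import structures.
Require Import Defs.
From Stdlib Require Import Reals Lra Lia.
From mathcomp Require Import all_boot zify.
Set Implicit Arguments. Unset Strict Implicit. Unset Printing Implicit Defensive.

Section Walks.
Variables (S : finType) (E : rel S) (lab : S -> S -> bool).

Lemma wl_cons x a t : walk_labels lab x (a :: t) = lab x a :: walk_labels lab a t.
Proof. by []. Qed.

Lemma wl_nil x : walk_labels lab x [::] = [::].
Proof. by []. Qed.

Lemma wl_cat x p1 p2 : walk_labels lab x (p1 ++ p2) =
  walk_labels lab x p1 ++ walk_labels lab (last x p1) p2.
Proof. elim: p1 x => [|a p1 IH] x //. by rewrite cat_cons !wl_cons IH. Qed.

Lemma size_wl x p : size (walk_labels lab x p) = size p.
Proof. elim: p x => [|a p IH] x //. by rewrite wl_cons /= IH. Qed.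

Definition ones x p := count id (walk_labels lab x p).
Definition wlL (l : seq S) := if l is x :: t then ones x t else 0.
Definition pathL (l : seq S) := if l is x :: t then path E x t else true.

Lemma wlL_split l1 y l2 : wlL (l1 ++ y :: l2) = wlL (rcons l1 y) + wlL (y :: l2).
Proof.
case: l1 => [|x l1] //=.
by rewrite /ones -cat_rcons wl_cat count_cat last_rcons.
Qed.

Lemma pathL_split l1 y l2 : pathL (l1 ++ y :: l2) = pathL (rcons l1 y) && pathL (y :: l2).
Proof.
case: l1 => [|x l1] //=.
by rewrite -cat_rcons cat_path last_rcons.
Qed.

Lemma nuniq_split (l : seq S) : ~~ uniq l ->
  exists a y b d, l = a ++ y :: b ++ y :: d /\ uniq (y :: b).
Proof.
elim: l => [|x l IH] //=.
rewrite negb_and negbK; case: (boolP (uniq l)) => [ul | nul].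
  rewrite orbF => xl.
  case/splitPr: xl ul => b d ul.
  exists [::], x, b, d; split => //=.
  rewrite cat_uniq in ul; case/and3P: ul => ub hb _.
  rewrite ub andbT /=; apply/negP => xb; move: hb => /=.
  by rewrite xb.
move=> _; case: (IH nul) => a [y [b [d [-> u]]]].
by exists (x :: a), y, b, d.
Qed.

Lemma cycle_ones_eq y b : cycle_ones lab (y :: b) = wlL (rcons (y :: b) y).
Proof.
rewrite /cycle_ones /cycle_edges rot1_cons /= /ones /walk_labels count_map.
have -> : y :: rcons b y = (y :: b) ++ [:: y] by rewrite -cats1.
rewrite -[rcons b y in X in _ = count _ X]cats0 zip_cat; last by rewrite size_rcons.
by rewrite /= cats0.
Qed.

Variable tau : R.
Hypothesis tau_ge0 : Rle 0 tau.
Hypothesis htau_le : forall c, simple_cycle E c -> Rle (cycle_ratio lab c) tau.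

Lemma wlL_le_size l : wlL l <= size l.
Proof.
case: l => [|x t] //=; rewrite /ones.
by apply: leq_trans (count_size _ _) _; rewrite size_wl.
Qed.

Lemma ones_bound_aux k : forall l, size l <= k -> pathL l ->
  Rle (INR (wlL l)) (Rplus (Rmult tau (INR (size l))) (INR #|S|)).
Proof.
elim: k => [|k IH] l.
  rewrite leqn0 => /nilP -> _ /=. rewrite Rmult_0_r Rplus_0_l; apply: pos_INR.
move=> hs hp; case: (boolP (uniq l)) => [ul | nul].
  have h1 : wlL l <= #|S|.
    apply: leq_trans (wlL_le_size l) _.
    by rewrite -(card_uniqP ul) max_card.
  move/leP: h1 => h1; apply le_INR in h1.
  have := pos_INR (size l); move=> h2.
  have : Rle 0 (Rmult tau (INR (size l))) by apply: Rmult_le_pos.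
  lra.
case: (nuniq_split nul) => a [y [b [d [el ub]]]].
have hp' : pathL (a ++ y :: d).
  move: hp; rewrite el !pathL_split => /andP [-> ].
  by rewrite -cat_cons pathL_split => /andP [_ ->].
have hc : pathL (rcons (y :: b) y).
  move: hp; rewrite el pathL_split => /andP [_].
  rewrite -cat_cons pathL_split => /andP [-> _]. by [].
have hsz : size l = (size (a ++ y :: d) + (size b).+1)%nat.
  by rewrite el !size_cat /= size_cat /=; lia.
have IH' := IH (a ++ y :: d).
have hw : wlL l = (wlL (a ++ y :: d) + wlL (rcons (y :: b) y))%nat.
  rewrite el !wlL_split -cat_cons wlL_split; lia.
have hcyc : Rle (INR (wlL (rcons (y :: b) y))) (Rmult tau (INR (size b).+1)).
  have hsc : simple_cycle E (y :: b).
    by apply/and3P; split.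
  have h := htau_le hsc; rewrite /cycle_ratio cycle_ones_eq in h.
  change (size (y :: b)) with (size b).+1 in h.
  have hpos : Rlt 0 (INR (size b).+1) by apply: lt_0_INR; lia.
  set a1 := INR (wlL _) in h *; set c1 := INR _ in h hpos *.
  have -> : a1 = Rmult (Rdiv a1 c1) c1 by field; lra.
  apply: Rmult_le_compat_r => //; lra.
have h3 : size (a ++ y :: d) <= k.
  move: hs; rewrite hsz; lia.
have := IH' h3 hp'.
rewrite hw hsz !plus_INR; lra.
Qed.
End Walks.
Lemma greedy (T : finType) (r : T -> T -> Prop) (D : nat) :
  (forall x y, r x y -> r y x) ->
  (forall x, exists N : {set T}, #|N| <= D /\ forall y, r x y -> y \in N) ->
  exists F : {set T}, (forall x y, x \in F -> y \in F -> x <> y -> ~ r x y) /\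
    #|T| <= #|F| * D.+1.
Proof.
move=> rsym hN.
suff H : forall k (A : {set T}), #|A| <= k -> exists F : {set T},
   F \subset A /\ (forall x y, x \in F -> y \in F -> x <> y -> ~ r x y) /\
    #|A| <= #|F| * D.+1.
  case: (H _ [set: T] (leqnn _)) => F [_ [h1 h2]]; exists F; split => //.
  by rewrite cardsT in h2.
elim => [|k IH] A hA.
  exists set0; split; first by rewrite sub0set.
  split; first by move=> x y; rewrite inE.
  by move: hA; rewrite leqn0 => /eqP ->.
case: (set_0Vmem A) => [-> | [x xA]].
  exists set0; split; first by rewrite sub0set.
  split; first by move=> x y; rewrite inE.
  by rewrite cards0.
case: (hN x) => N [hNc hNr].
set M := x |: N.
have hA' : #|A :\: M| <= k.
  have := cardsID M A.
  have : 0 < #|A :&: M| by apply/card_gt0P; exists x; rewrite !inE xA eqxx.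
  lia.
case: (IH _ hA') => F' [sF' [iF' cF']].
have xF' : x \notin F'.
  apply/negP => /(subsetP sF'); rewrite !inE eqxx; by [].
exists (x |: F'); split.
  apply/subsetP => y; rewrite !inE => /orP [/eqP -> // | /(subsetP sF')].
  by rewrite inE => /andP [].
split.
  have out : forall y, y \in F' -> ~ r x y.
    move=> y /(subsetP sF'); rewrite !inE negb_or => /andP [/andP [_ yN] _] rxy.
    by move: yN; rewrite (hNr _ rxy).
  move=> y z; rewrite !inE => /orP [/eqP -> | yF] /orP [/eqP -> | zF] //.
  - by move=> _; apply: out.
  - by move=> _ /rsym; apply: out.
  - by apply: iF'.
rewrite cardsU1 xF' /=.
have := cardsID M A.
have : #|A :&: M| <= D.+1.
  apply: leq_trans (subset_leq_card (subsetIr A M)) _.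
  by rewrite cardsU1; case: (x \in N) => /=; lia.
lia.
Qed.
Lemma RplusA' : associative Rplus.
Proof. by move=> x y z; rewrite Rplus_assoc. Qed.
HB.instance Definition _ := Monoid.isComLaw.Build R R0 Rplus RplusA' Rplus_comm Rplus_0_l.

Lemma big_Rle (I : Type) (r : seq I) (P : pred I) (F G : I -> R) :
  (forall i, P i -> Rle (F i) (G i)) ->
  Rle (\big[Rplus/R0]_(i <- r | P i) F i) (\big[Rplus/R0]_(i <- r | P i) G i).
Proof.
move=> h; apply: (big_ind2 (fun x y => Rle x y)) => //; first by apply: Rle_refl.
by move=> *; apply: Rplus_le_compat.
Qed.

Lemma big_Rmult_r (I : Type) (r : seq I) (P : pred I) (F : I -> R) c :
  Rmult (\big[Rplus/R0]_(i <- r | P i) F i) c = \big[Rplus/R0]_(i <- r | P i) Rmult (F i) c.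
Proof.
apply: (big_morph (fun x => Rmult x c)).
  by move=> x y; rewrite Rmult_plus_distr_r.
by rewrite Rmult_0_l.
Qed.

Lemma INR_sum (I : Type) (r : seq I) (P : pred I) (F : I -> nat) :
  INR (\sum_(i <- r | P i) F i) = \big[Rplus/R0]_(i <- r | P i) INR (F i).
Proof.
apply: (big_morph INR); last by [].
by move=> x y; rewrite plus_INR.
Qed.

Section WalkCount.
Variables (S : finType) (E : rel S).

Fixpoint walks (n : nat) (s : S) : seq (seq S) :=
  if n is n'.+1 then
    flatten [seq [seq s' :: w | w <- walks n' s'] | s' <- index_enum S & E s s']
  else [:: [::]].

Lemma walks_path n s w : w \in walks n s -> path E s w /\ size w = n.
Proof.
elim: n s w => [|n IH] s w /=.
  by rewrite inE => /eqP ->.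
case/flatten_mapP => s'; rewrite mem_filter => /andP [hE _].
case/mapP => w' /IH [hp hs] ->; by rewrite /= hE hp hs.
Qed.

Lemma path_walks s w : path E s w -> w \in walks (size w) s.
Proof.
elim: w s => [|a w IH] s /=; first by rewrite inE.
case/andP => hE hp; apply/flatten_mapP; exists a.
  by rewrite mem_filter hE mem_index_enum.
by apply/mapP; exists w => //; apply: IH.
Qed.

Lemma size_walksS n s :
  size (walks n.+1 s) = \sum_(s' | E s s') size (walks n s').
Proof.
rewrite /= size_flatten /shape sumnE !big_map big_filter.
by apply: eq_bigr => s' _; rewrite size_map.
Qed.

Variables (lam : R) (v : S -> R).
Hypothesis hv : forall s, \big[Rplus/R0]_(s' : S) Rmult (adj E s s') (v s') = Rmult lam (v s).
Variable m : R.
Hypothesis hm : forall s, Rle m (v s).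
Hypothesis hm0 : Rle 0 m.

Lemma walks_perron n s : Rle (Rmult (INR (size (walks n s))) m) (Rmult (pow lam n) (v s)).
Proof.
elim: n s => [|n IH] s.
  by rewrite /= Rmult_1_l Rmult_1_l; apply: hm.
rewrite size_walksS INR_sum big_Rmult_r.
apply: Rle_trans (big_Rle _ (fun s' _ => IH s')) _.
rewrite big_mkcond /=.
have -> : Rmult (Rmult lam (pow lam n)) (v s) = Rmult (pow lam n) (Rmult lam (v s)) by ring.
rewrite -hv.
rewrite Rmult_comm big_Rmult_r; apply: Req_le; apply: eq_bigr => s' _.
rewrite /adj; case: (E s s'); ring.
Qed.

End WalkCount.

Section Fill.
Variable X : finType.

Fixpoint fill (v : seq bool) (x z : seq X) : seq X :=
  match v, x with
  | b :: v', a :: x' => if b then head a z :: fill v' x' (behead z) else a :: fill v' x' z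
  | _, _ => [::]
  end.

Fixpoint erased (v : seq bool) (y : seq X) : seq X :=
  match v, y with
  | b :: v', a :: y' => if b then a :: erased v' y' else erased v' y'
  | _, _ => [::]
  end.

Lemma size_erased v y : size (erased v y) <= count id v.
Proof.
elim: v y => [|b v IH] [|a y] //=; case: b => /=; first by rewrite ltnS.
by rewrite add0n.
Qed.

Lemma fill_out v x y zr : size x = size v -> size y = size v ->
  output x v = output y v -> fill v x (erased v y ++ zr) = y.
Proof.
elim: v x y zr => [|b v IH] [|a x] [|c y] zr //=; try by [].
move=> [hx] [hy]; rewrite /output /=; case: b => /=.
  by case=> h; rewrite IH.
by case=> -> h; rewrite IH.
Qed.

Lemma output_eq_v (x y : seq X) v1 v2 : size x = size v1 -> size y = size v2 ->
  size v1 = size v2 -> output x v1 = output y v2 -> v1 = v2.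
Proof.
elim: v1 v2 x y => [|b v1 IH] [|b' v2] [|a x] [|c y] //=.
move=> [hx] [hy] [hv]; rewrite /output /=.
case=> h1 h2; rewrite (IH v2 x y) //.
by move: h1; case: b; case: b'.
Qed.
End Fill.

Section Lower.
Variables (X S : finType) (E : rel S) (lab : S -> S -> bool) (d : X) (n K : nat).
Hypothesis hK : forall s w, w \in walks E n s -> ones lab s w <= K.

Definition SPw : seq (S * seq S) :=
  flatten [seq [seq (s, w) | w <- walks E n s] | s <- index_enum S].

Definition Wn := \sum_(s : S) size (walks E n s).

Lemma size_SP : size SPw = Wn.
Proof.
rewrite /SPw size_flatten /shape sumnE !big_map /Wn.
by apply: eq_bigr => s _; rewrite size_map.
Qed.

Definition cands (x : n.-tuple X) : seq (n.-tuple X) :=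
  [seq insubd x (fill (walk_labels lab sp.1 sp.2) x (tval z)) | sp <- SPw, z <- enum {: K.-tuple X}].

Lemma size_cands x : size (cands x) = Wn * #|X| ^ K.
Proof. by rewrite /cands size_allpairs size_SP -cardE card_tuple. Qed.

Definition conf (x y : n.-tuple X) : Prop :=
  exists s1 s2 (v1 v2 : n.-tuple bool), admissible E lab s1 v1 /\ admissible E lab s2 v2 /\
    output x v1 = output y v2.

Lemma conf_cands x y : conf x y -> y \in cands x.
Proof.
case=> s1 [s2 [v1 [v2 [h1 [[p [hps [hpp hpl]]] ho]]]]].
have ev : tval v1 = tval v2.
  by apply: (output_eq_v (x := x) (y := y)); rewrite ?size_tuple.
have hp : p \in walks E n s2.
  by move: (path_walks hpp); rewrite hps size_tuple.
have hsp : (s2, p) \in SPw.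
  apply/flatten_mapP; exists s2; first by rewrite mem_index_enum.
  by apply/mapP; exists p.
set e := erased v2 y.
have he : size e <= K.
  apply: leq_trans (size_erased _ _) _.
  by rewrite -hpl; apply: hK.
have hz : size (e ++ nseq (K - size e) d) == K by rewrite size_cat size_nseq; apply/eqP; lia.
set z := Tuple hz.
have -> : y = insubd x (fill (walk_labels lab (s2, p).1 (s2, p).2) x (tval z)).
  rewrite /= hpl /e fill_out ?size_tuple ?valKd //.
  by move: ho; rewrite ev.
rewrite /cands; apply: (allpairs_f (fun sp z => insubd x (fill (walk_labels lab sp.1 sp.2) x (tval z)))) => //.
by rewrite mem_enum.
Qed.

Lemma lower_code : exists F : {set n.-tuple X}, zero_error_code E lab F /\
  #|X| ^ n <= #|F| * (Wn * #|X| ^ K).+1.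
Proof.
have hs : forall x y, conf x y -> conf y x.
  move=> x y [s1 [s2 [v1 [v2 [h1 [h2 ho]]]]]].
  by exists s2, s1, v2, v1.
have hN : forall x, exists N : {set n.-tuple X}, #|N| <= Wn * #|X| ^ K /\ forall y, conf x y -> y \in N.
  move=> x; exists [set y | y \in cands x]; split.
    by rewrite -(size_cands x); apply: leq_trans (card_size _); rewrite cardsE.
  by move=> y /conf_cands; rewrite inE.
have [F [hF hc]] := greedy hs hN.
exists F; split; last by rewrite card_tuple in hc.
move=> x1 x2 h1 h2 hne s1 s2 v1 v2 a1 a2 ho.
by apply: (hF x1 x2 h1 h2 hne); exists s1, s2, v1, v2.
Qed.
End Lower.

Lemma modS1 k l : 0 < l -> (k %% l).+1 < l -> k.+1 %% l = (k %% l).+1.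
Proof. by move=> _ h; rewrite {1}(divn_eq k l) -addnS modnMDl modn_small. Qed.
Lemma modS2 k l : 0 < l -> (k %% l).+1 = l -> k.+1 %% l = 0.
Proof. by move=> _ h; rewrite {1}(divn_eq k l) -addnS h modnMDl modnn. Qed.

Section Cyc.
Variables (S : finType) (E : rel S) (lab : S -> S -> bool) (c0 : S) (c' : seq S).
Hypothesis hcyc : cycle E (c0 :: c').
Let c := c0 :: c'.
Let l := size c.
Definition cyc k := nth c0 c (k %% l).
Definition wc k : nat := lab (cyc k) (cyc k.+1).

Lemma l_gt0 : 0 < l. Proof. by []. Qed.

Lemma cyc_edge k : E (cyc k) (cyc k.+1).
Proof.
have hp : path E c0 (rcons c' c0) by [].
have hi : k %% l < l by rewrite ltn_mod.
move/(pathP c0): hp => /(_ (k %% l)); rewrite size_rcons => /(_ hi).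
rewrite -rcons_cons nth_rcons -/c -/l hi /cyc.
rewrite nth_rcons.
case: (ltnP (k %% l).+1 l) => h.
  rewrite modS1 //. have -> : k %% l < size c' by move: h; rewrite /l /=.
  by [].
have h2 : (k %% l).+1 = l by lia.
rewrite modS2 //=.
have -> : (k %% l < size c') = false by move: h2; rewrite /l /=; lia.
by have -> : (k %% l == size c') by move: h2; rewrite /l /=; lia.
Qed.


Fixpoint cwalk j n : seq S := if n is n'.+1 then cyc j.+1 :: cwalk j.+1 n' else [::].

Lemma size_cwalk j n : size (cwalk j n) = n.
Proof. by elim: n j => [|n IH] j //=; rewrite IH. Qed.

Lemma path_cwalk j n : path E (cyc j) (cwalk j n).
Proof. by elim: n j => [|n IH] j //=; rewrite cyc_edge IH. Qed.

Lemma ones_cwalk j n : ones lab (cyc j) (cwalk j n) = \sum_(0 <= t < n) wc (j + t).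
Proof.
elim: n j => [|n IH] j; first by rewrite big_geq.
rewrite big_nat_recl // /= /ones wl_cons /= -/(ones lab _ _) IH addn0.
by congr (_ + _); apply: eq_bigr => t _; rewrite addSnnS.
Qed.

Lemma wc_per k : wc (k + l) = wc k.
Proof. by rewrite /wc /cyc -addSn !modnDr. Qed.

Lemma wc_shift t : \sum_(0 <= j < l) wc (j + t) = \sum_(0 <= j < l) wc j.
Proof.
elim: t => [|t IH]; first by apply: eq_bigr => j _; rewrite addn0.
rewrite -IH.
have h1 := @big_nat_recl nat 0 addn l 0 (fun j => wc (j + t)) (leq0n l).
have h2 := @big_nat_recr nat 0 addn l 0 (fun j => wc (j + t)) (leq0n l).
rewrite h1 /= in h2.
have e1 : \sum_(0 <= i < l) wc (i.+1 + t) = \sum_(0 <= j < l) wc (j + t.+1).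
  by apply: eq_bigr => j _; rewrite addSnnS.
rewrite -e1.
have : wc (l + t) = wc (0 + t) by rewrite addnC wc_per.
lia.
Qed.

Lemma nth_cwalk j n i : i < n -> nth c0 (cwalk j n) i = cyc (j + i).+1.
Proof.
elim: n j i => [|n IH] j [|i] //= hi; first by rewrite addn0.
by rewrite IH // addSnnS.
Qed.

Lemma cwalk_full : cwalk 0 l = rcons c' c0.
Proof.
apply: (@eq_from_nth _ c0); first by rewrite size_cwalk size_rcons.
move=> i; rewrite size_cwalk => hi.
rewrite nth_cwalk // add0n /cyc nth_rcons.
have hl : l = (size c').+1 by [].
case: (ltnP i (size c')) => h.
  by rewrite modn_small //= hl.
have h2 : i = size c' by lia.
by rewrite h2 eqxx -hl modnn.
Qed.

Lemma ones_cycle : cycle_ones lab c = \sum_(0 <= t < l) wc t.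
Proof.
rewrite cycle_ones_eq /= -cwalk_full.
have -> : c0 = cyc 0 by rewrite /cyc mod0n.
by rewrite ones_cwalk.
Qed.

Lemma sum_cwalk n : \sum_(0 <= j < l) ones lab (cyc j) (cwalk j n) = n * cycle_ones lab c.
Proof.
rewrite ones_cycle.
under eq_bigr do rewrite ones_cwalk.
rewrite exchange_big /=.
under eq_bigr do rewrite wc_shift.
by rewrite sum_nat_const_nat subn0.
Qed.

Lemma good_start n : exists j, n * cycle_ones lab c <= ones lab (cyc j) (cwalk j n) * l.
Proof.
case: (boolP [exists j : 'I_l, n * cycle_ones lab c <= ones lab (cyc j) (cwalk j n) * l]).
  by case/existsP => j hj; exists j.
rewrite negb_exists => /forallP hall; exfalso.
have h1 : \sum_(j < l) (ones lab (cyc j) (cwalk j n) * l).+1 <= \sum_(j < l) (n * cycle_ones lab c).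
  by apply: leq_sum => j _; move: (hall j); rewrite -ltnNge.
move: h1; rewrite sum_nat_const card_ord.
have -> : \sum_(j < l) (ones lab (cyc j) (cwalk j n) * l).+1 =
   (\sum_(j < l) ones lab (cyc j) (cwalk j n)) * l + l.
  rewrite (eq_bigr (fun j : 'I_l => ones lab (cyc j) (cwalk j n) * l + 1)); last by move=> j _; rewrite addn1.
  rewrite big_split /= sum_nat_const card_ord big_distrl /=; lia.
rewrite -(big_mkord xpredT (fun j => ones lab (cyc j) (cwalk j n))) sum_cwalk.
have := l_gt0; lia.
Qed.
End Cyc.

Section Upper.
Variables (X S : finType) (E : rel S) (lab : S -> S -> bool) (d : X) (n : nat).

Lemma output_agree (x1 x2 : seq X) (v : seq bool) : size x1 = size v -> size x2 = size v ->
  (forall i, i < size v -> ~~ nth false v i -> nth d x1 i = nth d x2 i) ->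
  output x1 v = output x2 v.
Proof.
elim: v x1 x2 => [|b v IH] [|a1 x1] [|a2 x2] //= [h1] [h2] h.
rewrite /output /=; congr cons.
  by case: b h => // h; have /= -> := h 0 erefl erefl.
by apply: IH => // i hi hv; apply: (h i.+1).
Qed.

Lemma upper_card (F : {set n.-tuple X}) s (v : n.-tuple bool) :
  zero_error_code E lab F -> admissible E lab s v -> #|F| <= #|X| ^ (n - count id v).
Proof.
move=> hz ha.
set L := [seq i <- enum 'I_n | ~~ tnth v i].
pose g (x : n.-tuple X) := map_tuple (tnth x) (in_tuple L).
have inj : {in F &, injective g}.
  move=> x1 x2 h1 h2 hg; case: (eqVneq x1 x2) => // hne; exfalso.
  move/eqP: hne => hne.
  have := hz x1 x2 h1 h2 hne s s v v ha ha; apply.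
  have hm : map (tnth x1) L = map (tnth x2) L by move: (congr1 val hg).
  apply: output_agree; rewrite ?size_tuple // => i hi hv.
  have := (eq_in_map _ _ _).2 hm (Ordinal hi).
  rewrite mem_filter mem_enum andbT (tnth_nth false v (Ordinal hi)) /=.
  move=> /(_ hv); by rewrite !(tnth_nth d).
rewrite -(card_in_imset inj).
apply: leq_trans (max_card _) _.
rewrite card_tuple /= /L size_filter.
have -> : count (fun i => ~~ tnth v i) (enum 'I_n) = count negb v.
  by rewrite -{1}(map_tnth_enum v) count_map.
have e : count negb v = n - count id v.
  have := count_predC id v; rewrite size_tuple.
  change (count (predC id) v) with (count negb v); lia.
by rewrite e.
Qed.
End Upper.

Lemma INR_expn a b : INR (a ^ b) = pow (INR a) b.
Proof. elim: b => [|b IH] //=; by rewrite expnS mult_INR IH. Qed.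

Lemma ln_le_mono x y : Rlt 0 x -> Rle x y -> Rle (ln x) (ln y).
Proof.
move=> hx hxy; case: (Rle_lt_or_eq_dec _ _ hxy) => h.
  by apply: Rlt_le; apply: ln_increasing.
by rewrite h; apply: Rle_refl.
Qed.

Lemma ln_0 : ln R0 = R0.
Proof. rewrite /ln; case: Rlt_dec => h; [exfalso; lra | by []]. Qed.

Lemma lnq_pos q : (1 < q)%N -> Rlt 0 (ln (INR q)).
Proof.
move=> hq; rewrite -ln_1; apply: ln_increasing; first lra.
by apply: lt_1_INR; apply/ltP.
Qed.

Lemma logb_le q a m : (1 < q)%N -> (a <= q ^ m)%N -> Rle (logb q (INR a)) (INR m).
Proof.
move=> hq ha; have hL := lnq_pos hq.
rewrite /logb; case: a ha => [|a] ha.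
  rewrite /= ln_0 /Rdiv Rmult_0_l; apply: pos_INR.
have h1 : Rle (ln (INR a.+1)) (Rmult (INR m) (ln (INR q))).
  rewrite -ln_pow; last by apply: lt_0_INR; apply/ltP; lia.
  apply: ln_le_mono; first by apply: lt_0_INR; apply/ltP.
  by rewrite -INR_expn; apply: le_INR; apply/leP.
have -> : INR m = Rdiv (Rmult (INR m) (ln (INR q))) (ln (INR q)) by field; lra.
apply: Rmult_le_compat_r => //; apply: Rlt_le; apply: Rinv_0_lt_compat => //.
Qed.

Lemma lower_real (q lam m V FF tau Sn : R) (n K : nat) :
  Rlt 1 q -> Rlt 0 lam -> Rlt 0 m -> Rlt 0 V -> Rlt 0 FF -> (0 < n)%N ->
  Rle (Rmult (pow q n) m) (Rmult FF (Rmult (Rmult (Rmult 2 (pow q K)) (pow lam n)) V)) ->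
  Rle (INR K) (Rplus (Rmult tau (INR n.+1)) Sn) ->
  Rle (Rminus (Rminus (Rminus 1 tau) (Rdiv (ln lam) (ln q)))
        (Rdiv (Rplus (Rplus tau Sn) (Rdiv (Rminus (Rplus (ln 2) (ln V)) (ln m)) (ln q))) (INR n)))
      (Rdiv (Rdiv (ln FF) (ln q)) (INR n)).
Proof.
move=> hq hlam hm hV hF hn hineq hK.
have hL : Rlt 0 (ln q) by rewrite -ln_1; apply: ln_increasing; lra.
have hn' : Rlt 0 (INR n) by apply: lt_0_INR; apply/ltP.
have hqp : Rlt 0 q by lra.
have hl := ln_le_mono (Rmult_lt_0_compat _ _ (pow_lt _ n hqp) hm) hineq.
rewrite !ln_mult ?ln_pow // in hl; try lra;
  repeat (apply: Rmult_lt_0_compat || apply: pow_lt); try lra.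
set L := ln q in hl hL *.
set P := Rdiv (ln FF) L.
have eP : ln FF = Rmult P L by rewrite /P; field; lra.
set Q := Rdiv (ln lam) L.
have eQ : ln lam = Rmult Q L by rewrite /Q; field; lra.
set R1 := Rdiv (Rminus (Rplus (ln 2) (ln V)) (ln m)) L.
have eR : Rminus (Rplus (ln 2) (ln V)) (ln m) = Rmult R1 L by rewrite /R1; field; lra.
have h1 : Rle (Rmult (Rminus (Rminus (Rminus (Rminus (INR n) R1) P) (INR K)) (Rmult (INR n) Q)) L) 0.
  rewrite eP eQ in hl.
  have : ln m = Rminus (Rplus (ln 2) (ln V)) (Rmult R1 L) by lra.
  move=> e; rewrite e in hl; nra.
have h2 : Rle (Rminus (Rminus (Rminus (Rminus (INR n) R1) P) (INR K)) (Rmult (INR n) Q)) 0 by nra.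
rewrite S_INR in hK.
have h3 : Rle (Rminus (Rminus (Rminus (INR n) (Rmult tau (INR n))) (Rmult Q (INR n))) (Rplus (Rplus tau Sn) R1)) P by lra.
have -> : Rminus (Rminus (Rminus 1 tau) Q) (Rdiv (Rplus (Rplus tau Sn) R1) (INR n)) =
  Rdiv (Rminus (Rminus (Rminus (INR n) (Rmult tau (INR n))) (Rmult Q (INR n))) (Rplus (Rplus tau Sn) R1)) (INR n).
  by field; lra.
apply: Rmult_le_compat_r => //; apply: Rlt_le; apply: Rinv_0_lt_compat => //.
Qed.

Lemma walks_nonempty (S : finType) (E : rel S) :
  (forall s, exists s', E s s') -> forall n s, 0 < size (walks E n s).
Proof.
move=> hs; elim=> [|n IH] s //.
rewrite size_walksS; case: (hs s) => s' hs'.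
rewrite (bigD1 s') //=; have := IH s'; lia.
Qed.

Lemma min_exists (S : finType) (v : S -> R) :
  (forall s, Rlt 0 (v s)) -> exists m, Rlt 0 m /\ forall s, Rle m (v s).
Proof.
move=> hv.
suff : forall l : seq S, exists m, Rlt 0 m /\ forall s, s \in l -> Rle m (v s).
  by case/(_ (enum S)) => m [hm h]; exists m; split => // s; apply: h; rewrite mem_enum.
elim=> [|a l [m [hm h]]]; first by exists R1; split => //; lra.
exists (Rmin m (v a)); split; first by apply: Rmin_pos.
move=> s; rewrite inE => /orP [/eqP -> | hs]; first by apply: Rmin_r.
by apply: Rle_trans (Rmin_l _ _) (h _ hs).
Qed.

Lemma big_pos_ge (S : finType) (v : S -> R) (s0 : S) :
  (forall s, Rle 0 (v s)) -> Rle (v s0) (\big[Rplus/R0]_(s : S) v s).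
Proof.
move=> hv; rewrite (bigD1 s0) //=.
have : Rle 0 (\big[Rplus/R0]_(s | s != s0) v s).
  by apply: (big_ind (fun x => Rle 0 x)) => //; [lra | move=> *; lra].
lra.
Qed.

Lemma max_le_real (T : eqType) (r : seq T) (f : T -> nat) (B : R) :
  Rle 0 B -> (forall x, x \in r -> Rle (INR (f x)) B) ->
  Rle (INR (\max_(x <- r) f x)) B.
Proof.
move=> hB; elim: r => [|a r IH] h; first by rewrite big_nil.
rewrite big_cons /maxn; case: ifP => _.
  by apply: IH => x hx; apply: h; rewrite inE hx orbT.
by apply: h; rewrite inE eqxx.
Qed.

Theorem theorem4 (X S : finType) (E : rel S) (lab : S -> S -> bool)
  (hq : (1 < #|X|)%N)
  (hsc : strongly_connected E) (hlab : distinct_labels E lab)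
  (lam tau C0 : R)
  (hlam : perron_eigenvalue E lam)
  (htau : maximal_ratio E lab tau)
  (hC0 : zero_error_capacity X E lab C0) :
  Rle (Rminus (Rminus R1 tau) (logb #|X| lam)) C0 /\ Rle C0 (Rminus R1 tau).
Proof.
have [d _] : exists d : X, true by case/card_gt0P: (ltnW hq) => d _; exists d.
case: htau => [[c [hsimp hrat]] htau_le].
case/and3P: hsimp => hne hcy hu.
case: c hne hcy hu hrat => [|c0 c'] // _ hcy hu hrat.
have hl : Rlt 0 (INR (size (c0 :: c'))) by apply: lt_0_INR; apply/ltP.
have tau0 : Rle 0 tau.
  rewrite -hrat /cycle_ratio /Rdiv; apply: Rmult_le_pos; first by apply: pos_INR.
  by apply: Rlt_le; apply: Rinv_0_lt_compat.
have hL := lnq_pos hq.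
split; last first.
  apply: (proj2 hC0) => r [n [F [hn [hz ->]]]].
  have [j hj] := good_start lab hcy n.
  set p := cwalk c0 c' j n; set s := cyc c0 c' j.
  have hsz : size (walk_labels lab s p) == n by rewrite size_wl size_cwalk.
  set vt := Tuple hsz.
  have ha : admissible E lab s vt.
    exists p; split; first by rewrite size_cwalk size_tuple.
    by split; [apply: path_cwalk | by []].
  have hc := upper_card d hz ha.
  have ho : ones lab s p <= n.
    by rewrite /ones; apply: leq_trans (count_size _ _) _; rewrite size_wl size_cwalk.
  have hlog := logb_le hq hc.
  change (count id vt) with (ones lab s p) in hlog.
  rewrite minus_INR in hlog; last by apply/leP.
  have hn' : Rlt 0 (INR n) by apply: lt_0_INR; apply/ltP.
  have hj' : Rle (Rmult (INR n) tau) (INR (ones lab s p)).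
    move/leP: hj => /le_INR; rewrite !mult_INR => hj.
    rewrite -hrat /cycle_ratio.
    set e := INR (cycle_ones _ _) in hj *; set l := INR (size _) in hj hl *.
    set o := INR (ones _ _ _) in hj *.
    have -> : o = Rdiv (Rmult o l) l by field; lra.
    have -> : Rmult (INR n) (Rdiv e l) = Rdiv (Rmult (INR n) e) l by field; lra.
    apply: Rmult_le_compat_r => //; apply: Rlt_le; apply: Rinv_0_lt_compat => //.
  have -> : Rminus R1 tau = Rdiv (Rminus (INR n) (Rmult (INR n) tau)) (INR n) by field; lra.
  apply: Rmult_le_compat_r; first by apply: Rlt_le; apply: Rinv_0_lt_compat.
  lra.
case: hlam => hlam0 [v [vpos hv]].
have [m [hm0 hm]] := min_exists vpos.
set V := \big[Rplus/R0]_(x : S) v x.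
have hV : Rlt 0 V.
  apply: Rlt_le_trans (vpos c0) _; apply: big_pos_ge => s; apply: Rlt_le; apply: vpos.
have hsucc : forall s, exists s', E s s'.
  move=> s; case: (hsc s s) => [[|a p] [hp [hpath _]]] //.
  by exists a; move: hpath => /= /andP [].
set B := Rplus (Rplus tau (INR #|S|)) (Rdiv (Rminus (Rplus (ln 2) (ln V)) (ln m)) (ln (INR #|X|))).
have key : forall n, (0 < n)%N ->
   Rle (Rminus (Rminus (Rminus 1 tau) (Rdiv (ln lam) (ln (INR #|X|)))) (Rdiv B (INR n))) C0.
  move=> n hn.
  set K := \max_(sw <- SPw E n) ones lab sw.1 sw.2.
  have hK : forall s w, w \in walks E n s -> ones lab s w <= K.
    move=> s w hw.
    have hsw : (s, w) \in SPw E n.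
      apply/flatten_mapP; exists s; first by rewrite mem_index_enum.
      by apply/mapP; exists w.
    exact: (@leq_bigmax_seq _ _ xpredT (fun sw => ones lab sw.1 sw.2) _ hsw).
  have hKr : Rle (INR K) (Rplus (Rmult tau (INR n.+1)) (INR #|S|)).
    apply: max_le_real.
      have := pos_INR n.+1; have := pos_INR #|S|; move=> *.
      have := Rmult_le_pos _ _ tau0 (pos_INR n.+1); lra.
    case=> s w; move/flatten_mapP => [s' _ /mapP [w' hw' [-> ->]]] /=.
    have [hp hs] := walks_path hw'.
    have := ones_bound_aux tau0 htau_le (leqnn (size (s' :: w'))) hp.
    by rewrite /= hs.
  have [F [hz hc]] := lower_code d hK.
  have hW : 0 < Wn E n.
    rewrite /Wn (bigD1 c0) //=; have := walks_nonempty hsucc n c0; lia.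
  have hWm : Rle (Rmult (INR (Wn E n)) m) (Rmult (pow lam n) V).
    rewrite /Wn INR_sum big_Rmult_r /V Rmult_comm big_Rmult_r.
    apply: big_Rle => s _; rewrite Rmult_comm.
    rewrite Rmult_comm (Rmult_comm (v s)). have := walks_perron hv hm n s. by [].
  have hc2 : #|X| ^ n <= #|F| * (2 * Wn E n * #|X| ^ K).
    apply: leq_trans hc _; apply: leq_mul => //.
    have : 0 < #|X| ^ K by rewrite expn_gt0; lia.
    move: hW; nia.
  have hFpos : 0 < #|F|.
    have : 0 < #|X| ^ n by rewrite expn_gt0; lia.
    move: hc2; case: #|F| => //=; lia.
  have hr : code_rates X E lab (Rdiv (logb #|X| (INR #|F|)) (INR n)).
    by exists n, F.
  apply: Rle_trans (proj1 hC0 _ hr).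
  rewrite /logb.
  apply: (lower_real (m := m) (V := V) (K := K)) => //.
  - by apply: lt_1_INR; apply/ltP.
  - by apply: lt_0_INR; apply/ltP.
  - move/leP: hc2 => /le_INR; rewrite !mult_INR !INR_expn => h.
    apply: Rle_trans (Rmult_le_compat_r _ _ _ (Rlt_le _ _ hm0) h) _.
    set W := INR (Wn E n) in hWm *.
    have e : Rmult (Rmult (INR #|F|) (Rmult (Rmult (INR 2) W) (pow (INR #|X|) K))) m =
      Rmult (Rmult (INR #|F|) (Rmult (INR 2) (pow (INR #|X|) K))) (Rmult W m) by ring.
    rewrite e.
    have h1 : Rle 0 (Rmult (INR #|F|) (Rmult (INR 2) (pow (INR #|X|) K))).
      apply: Rmult_le_pos; first by apply: pos_INR.
      apply: Rmult_le_pos; first by apply: pos_INR.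
      by apply: pow_le; apply: pos_INR.
    apply: Rle_trans (Rmult_le_compat_l _ _ _ h1 hWm) _.
    have -> : INR 2 = Rplus 1 1 by rewrite /=; ring.
    apply: Req_le; ring.
rewrite /logb.
set A := Rminus (Rminus 1 tau) (Rdiv (ln lam) (ln (INR #|X|))) in key *.
apply: Rnot_lt_le => hlt.
have hg : Rgt (Rminus A C0) 0 by lra.
have [N hN] := INR_archimed (Rminus A C0) (Rabs B) hg.
have hk := key N.+1 (ltn0Sn N).
have hn : Rlt 0 (INR N.+1) by apply: lt_0_INR; lia.
have hB : Rlt B (Rmult (INR N.+1) (Rminus A C0)).
  rewrite S_INR.
  have := Rle_abs B; lra.
have hBn : Rlt (Rdiv B (INR N.+1)) (Rminus A C0).
  apply: (Rmult_lt_reg_r (INR N.+1)) => //.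
  rewrite /Rdiv Rmult_assoc Rinv_l; last lra.
  lra.
lra.
Qed.
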